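(* Let $\mathbb{F}\in\{\mathbb{R},\mathbb{C}\}$, let $n\geq 1$, and equip $M_n(\mathbb{F})$ with a norm $\|\cdot\|$. Let $f,g\colon GL_n(\mathbb{F})\to GL_n(\mathbb{F})$ be mappings, at least one of which is open (with respect to the topology of $GL_n(\mathbb{F})$ as a subspace of $M_n(\mathbb{F})$). Let $A,B\in M_n(\mathbb{F})$. Then for every $\varepsilon>0$ there exist invertible matrices $A_\varepsilon,B_\varepsilon\in GL_n(\mathbb{F})$, each with a simple spectrum, such that $\|A-A_\varepsilon\|<\varepsilon$, $\|B-B_\varepsilon\|<\varepsilon$, and the product $f(A_\varepsilon)g(B_\varepsilon)$ has a simple spectrum.
   Context: $M_n(\mathbb{F})$ is the space of $n\times n$ matrices over $\mathbb{F}$ and $GL_n(\mathbb{F})$ the group of invertible ones; all norms on $M_n(\mathbb{F})$ induce the same topology. A matrix has a simple spectrum if all its eigenvalues (the roots in $\mathbb{C}$ of its characteristic polynomial) have algebraic multiplicity one, i.e. are pairwise distinct. A mapping is open if it sends open sets to open sets. The mappings $f,g$ are not assumed to be continuous or homomorphisms. *)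

(* Defs.v *)
From HB Require Import structures.
From mathcomp Require Import all_boot all_order all_algebra.
From mathcomp Require Import reals.
From mathcomp Require Import complex.
Set Implicit Arguments. Unset Strict Implicit. Unset Printing Implicit Defensive.
Import Order.TTheory GRing.Theory Num.Theory.
Local Open Scope ring_scope.

(* A norm on M_n(F), valued in F (for F = C the values are forced to be
   nonnegative reals by 0 <= N A). *)
Definition is_mxnorm (F : numFieldType) (n : nat) (N : 'M[F]_n -> F) : Prop :=
  [/\ forall A, 0 <= N A,
      forall A, N A = 0 -> A = 0,
      forall A B, N (A + B) <= N A + N B &
      forall (c : F) A, N (c *: A) = `|c| * N A].

Definition open_in_GL (F : numFieldType) (n : nat) (N : 'M[F]_n -> F)
    (U : 'M[F]_n -> Prop) : Prop :=
  (forall A, U A -> A \in unitmx) /\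
  forall A, U A -> exists2 d : F, 0 < d &
    forall B, B \in unitmx -> N (B - A) < d -> U B.

Definition img (T : Type) (f : T -> T) (U : T -> Prop) : T -> Prop :=
  fun y => exists2 x, U x & y = f x.

Definition open_GL_map (F : numFieldType) (n : nat) (N : 'M[F]_n -> F)
    (f : 'M[F]_n -> 'M[F]_n) : Prop :=
  forall U, open_in_GL N U -> open_in_GL N (img f U).

(* Simple spectrum: every complex root of the characteristic polynomial
   (viewed in C = R[i] through the embedding iota : F -> C) has algebraic
   multiplicity one, i.e. (X - z)^2 never divides it. *)
Definition simple_spectrum (R : realType) (F : numFieldType)
    (iota : {rmorphism F -> R[i]}) (n : nat) (A : 'M[F]_n) : Prop :=
  forall z : R[i], ~~ ((('X - z%:P) ^+ 2) %| map_poly iota (char_poly A)).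

Definition prop1_for (R : realType) (F : numFieldType)
    (iota : {rmorphism F -> R[i]}) : Prop :=
  forall (n : nat), (0 < n)%N ->
  forall (N : 'M[F]_n -> F), is_mxnorm N ->
  forall (f g : 'M[F]_n -> 'M[F]_n),
    (forall A, A \in unitmx -> f A \in unitmx) ->
    (forall A, A \in unitmx -> g A \in unitmx) ->
    (open_GL_map N f \/ open_GL_map N g) ->
  forall (A B : 'M[F]_n) (eps : F), 0 < eps ->
  exists (Ae Be : 'M[F]_n),
    [/\ Ae \in unitmx /\ Be \in unitmx,
        simple_spectrum iota Ae /\ simple_spectrum iota Be,
        N (A - Ae) < eps /\ N (B - Be) < eps &
        simple_spectrum iota (f Ae *m g Be)].

(* Main.v *)
Require Import Defs.
From HB Require Import structures.
From mathcomp Require Import all_boot all_order all_algebra perm.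
From mathcomp Require Import reals complex separable.
From mathcomp Require Import boolp classical_sets topology normedtype derive.
From mathcomp Require Import ring lra.
Set Implicit Arguments. Unset Strict Implicit. Unset Printing Implicit Defensive.
Import Order.TTheory GRing.Theory Num.Theory.
Import numFieldNormedType.Exports.
Local Open Scope ring_scope.

Definition disc (F : fieldType) n (A : 'M[F]_n) :=
  resultant (char_poly A) (char_poly A)^`().

Lemma sq_sep (C : numClosedFieldType) (P : {poly C}) : P != 0 ->
  (forall z, ~~ (('X - z%:P) ^+ 2 %| P)) -> separable_poly P.
Proof.
move=> P0 H; apply/separable_polyP; split.
  apply/poly_square_freeP => u su; apply/negP => du.
  have [z rz] := closed_rootP u su.
  have /(dvdp_exp2r 2) h : ('X - z%:P) %| u by rewrite -root_factor_theorem.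
  by move: (H z); rewrite (dvdp_trans h du).
move=> u _ su; apply/eqP => h.
have := congr1 (fun p : {poly C} => p`_(size u).-2) h.
rewrite coef_deriv coef0.
have -> : ((size u).-2.+1 = (size u).-1)%N by case: (size u) su => [|[|k]].
move=> /eqP.
rewrite mulrn_eq0 /= -lead_coefE lead_coef_eq0 => /orP[|/eqP u0].
  by rewrite -subn1 subn_eq0 leqNgt su.
by move: su; rewrite u0 size_poly0.
Qed.

Lemma simpleE (R : realType) (F : numFieldType) (iota : {rmorphism F -> R[i]})
  n (A : 'M[F]_n) :
  simple_spectrum iota A <-> separable_poly (char_poly A).
Proof.
split => [H|H z].
  rewrite -(separable_map iota); apply: sq_sep => //.
  by rewrite map_poly_eq0 monic_neq0 // char_poly_monic.
by rewrite separable_nosquare ?separable_map ?size_XsubC.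
Qed.

Lemma sepE (F : numFieldType) n (A : 'M[F]_n) :
  separable_poly (char_poly A) = (disc A != 0).
Proof.
rewrite unlock /coprimep /disc resultant_eq0.
have : gcdp (char_poly A) (char_poly A)^`() != 0.
  by rewrite gcdp_eq0 negb_and monic_neq0 // char_poly_monic.
rewrite -size_poly_gt0; case: (size _) => [|[|k]] //.
Qed.

Definition Kmx (F : numFieldType) n : 'M[F]_n := diag_mx (\row_(i < n) (i.+1)%:R).

Lemma K_disc (F : numFieldType) n : disc (Kmx F n) * \det (Kmx F n) != 0.
Proof.
rewrite mulf_neq0 //.
  rewrite -sepE char_poly_trig ?diag_mx_is_trig //.
  have -> : \prod_(i < n) ('X - ((Kmx F n) i i)%:P) =
      \prod_(x <- [seq ((val i).+1)%:R | i <- index_enum 'I_n]) ('X - x%:P).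
    by rewrite big_map; apply: eq_bigr => i _; rewrite !mxE eqxx.
  rewrite separable_prod_XsubC map_inj_uniq ?index_enum_uniq //.
  by move=> i j /eqP; rewrite eqr_nat eqSS => /eqP/val_inj.
rewrite det_diag; apply/prodf_neq0 => i _; rewrite mxE pnatr_eq0 //.
Qed.


Section Closure.
Variables (T : Type) (V : comNzRingType) (P : (T -> V) -> Prop).
Hypotheses (Pext : forall f g, (forall x, f x = g x) -> P f -> P g)
  (Pc : forall c, P (fun _ => c))
  (PD : forall f g, P f -> P g -> P (fun x => f x + g x))
  (PM : forall f g, P f -> P g -> P (fun x => f x * g x)).

Lemma Pbig (I : Type) (r : seq I) (Q : pred I) (op : V -> V -> V) idx
  (Pop : forall f g, P f -> P g -> P (fun x => op (f x) (g x)))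
  (F : I -> T -> V) : (forall i, P (F i)) ->
  P (fun x => \big[op/idx]_(i <- r | Q i) F i x).
Proof.
move=> HF; elim: r => [|a r IH].
  by apply: (Pext (f := fun _ => idx)) => // x; rewrite big_nil.
case: (boolP (Q a)) => Qa.
  by apply: (Pext (f := fun x => op (F a x) (\big[op/idx]_(i <- r | Q i) F i x)))
    => [x|]; [rewrite big_cons Qa|apply: Pop].
by apply: (Pext _ IH) => x; rewrite big_cons (negbTE Qa).
Qed.

Lemma Psum (I : Type) (r : seq I) (Q : pred I) (F : I -> T -> V) :
  (forall i, P (F i)) -> P (fun x => \sum_(i <- r | Q i) F i x).
Proof. exact: Pbig. Qed.

Lemma Pprod (I : Type) (r : seq I) (Q : pred I) (F : I -> T -> V) :
  (forall i, P (F i)) -> P (fun x => \prod_(i <- r | Q i) F i x).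
Proof. exact: Pbig. Qed.

Lemma Pdet n (M : T -> 'M[V]_n) : (forall i j, P (fun x => M x i j)) ->
  P (fun x => \det (M x)).
Proof.
move=> HM; apply: (Pext (f := fun x => \sum_(s : 'S_n) (-1) ^+ s * \prod_i M x i (s i))).
  by [].
have := @Psum _ (index_enum _) xpredT (fun (s : 'S_n) x => (-1) ^+ s * \prod_i M x i (s i)).
move=> /(_ _) H; apply: H => s.
apply: PM => //; exact: (@Pprod _ _ _ (fun i x => M x i (s i))).
Qed.

Lemma Pnat (f : T -> V) k : P f -> P (fun x => f x *+ k).
Proof.
move=> Pf; apply: (Pext (f := fun x => f x * k%:R)); first by move=> x; rewrite mulr_natr.
exact: PM.
Qed.

Lemma Popp (f : T -> V) : P f -> P (fun x => - f x).
Proof.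
move=> Pf; apply: (Pext (f := fun x => (-1) * f x)); first by move=> x; rewrite mulN1r.
exact: PM.
Qed.

End Closure.

Definition PP (T : Type) (V : comNzRingType) (P : (T -> V) -> Prop)
  (p : T -> {poly V}) := forall k, P (fun x => (p x)`_k).

Section PolyClosure.
Variables (T : Type) (V : comNzRingType) (P : (T -> V) -> Prop).
Hypotheses (Pext : forall f g, (forall x, f x = g x) -> P f -> P g)
  (Pc : forall c, P (fun _ => c))
  (PD : forall f g, P f -> P g -> P (fun x => f x + g x))
  (PM : forall f g, P f -> P g -> P (fun x => f x * g x)).

Lemma PPext f g : (forall x, f x = g x) -> PP P f -> PP P g.
Proof. by move=> E Hf k; apply: (Pext _ (Hf k)) => x; rewrite E. Qed.

Lemma PPc c : PP P (fun _ => c).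
Proof. by move=> k; apply: Pc. Qed.

Lemma PPD f g : PP P f -> PP P g -> PP P (fun x => f x + g x).
Proof.
move=> Hf Hg k; apply: (Pext (f := fun x => (f x)`_k + (g x)`_k)).
  by move=> x; rewrite coefD.
exact: PD.
Qed.

Lemma PPM f g : PP P f -> PP P g -> PP P (fun x => f x * g x).
Proof.
move=> Hf Hg k.
apply: (Pext (f := fun x => \sum_(j < k.+1) (f x)`_j * (g x)`_(k - j))).
  by move=> x; rewrite coefM.
apply: (@Psum T V P Pext Pc PD _ (index_enum _) xpredT (fun (j : 'I_k.+1) x => (f x)`_j * (g x)`_(k - j))) => j.
exact: PM.
Qed.

Lemma PPC (c : T -> V) : P c -> PP P (fun x => (c x)%:P).
Proof.
move=> Hc k; apply: (Pext (f := fun x => if k == 0%N then c x else 0)).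
  by move=> x; rewrite coefC.
by case: (k == 0%N).
Qed.

Lemma PPderiv f : PP P f -> PP P (fun x => (f x)^`()).
Proof.
move=> Hf k; apply: (Pext (f := fun x => (f x)`_k.+1 *+ k.+1)).
  by move=> x; rewrite coef_deriv.
exact: Pnat.
Qed.

Lemma PPchar n (M : T -> 'M[V]_n) : (forall i j, P (fun x => M x i j)) ->
  PP P (fun x => char_poly (M x)).
Proof.
move=> HM.
apply: (@Pdet T {poly V} (PP P) PPext PPc PPD PPM n (fun x => char_poly_mx (M x))) => i j.
apply: (PPext (f := fun x => 'X *+ (i == j) + (- M x i j)%:P)).
  by move=> x; rewrite !mxE polyCN.
apply: PPD; first exact: PPc.
apply: PPC; exact: (Popp Pext Pc PM (HM i j)).
Qed.

Definition Syl a b (p q : {poly V}) : 'M[V]_(b + a) :=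
  \matrix_(i, j) match split i with
                 | inl k => p`_(j - k) *+ (k <= j)
                 | inr k => q`_(j - k) *+ (k <= j) end.

Lemma resE a b (p q : {poly V}) : size p = a.+1 -> size q = b.+1 ->
  resultant p q = \det (Syl a b p q).
Proof.
move=> hp hq; rewrite /resultant.
move: (Sylvester_mx p q) (@Sylvester_mxE _ p q); rewrite hp hq /= => S ES.
congr (\det _); apply/matrixP => i j; rewrite ES mxE.
by case: (split i).
Qed.

Lemma Pres a b (p q : T -> {poly V}) :
  (forall x, size (p x) = a.+1) -> (forall x, size (q x) = b.+1) ->
  PP P p -> PP P q -> P (fun x => resultant (p x) (q x)).
Proof.
move=> hp hq Hp Hq.
apply: (Pext (f := fun x => \det (Syl a b (p x) (q x)))).
  by move=> x; rewrite (resE (hp x) (hq x)).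
apply: Pdet => // i j.
apply: (Pext (f := fun x => match split i with
                 | inl k => (p x)`_(j - k) *+ (k <= j)
                 | inr k => (q x)`_(j - k) *+ (k <= j) end)).
  by move=> x; rewrite mxE.
by case: (split i) => k; apply: (Pnat Pext Pc PM).
Qed.

End PolyClosure.


Lemma size_deriv_char (F : numFieldType) m (A : 'M[F]_m.+1) :
  size (char_poly A)^`() = m.+1.
Proof.
have sp := size_char_poly A.
have lc : (char_poly A)`_m.+1 = 1.
  by have /monicP := char_poly_monic A; rewrite lead_coefE sp.
apply/eqP; rewrite eqn_leq; apply/andP; split.
  by rewrite -ltnS -sp lt_size_deriv // monic_neq0 // char_poly_monic.
have := coef_deriv (char_poly A) m; rewrite lc.
case: (leqP (size (char_poly A)^`()) m) => [h|//].
by rewrite [LHS](nth_default 0 h) => /eqP; rewrite eq_sym pnatr_eq0.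
Qed.

Section DiscClosure.
Variables (T : Type) (F : numFieldType) (P : (T -> F) -> Prop).
Hypotheses (Pext : forall f g, (forall x, f x = g x) -> P f -> P g)
  (Pc : forall c, P (fun _ => c))
  (PD : forall f g, P f -> P g -> P (fun x => f x + g x))
  (PM : forall f g, P f -> P g -> P (fun x => f x * g x)).

Lemma PG m (M : T -> 'M[F]_m.+1) : (forall i j, P (fun x => M x i j)) ->
  P (fun x => disc (M x) * \det (M x)).
Proof.
move=> HM; apply: PM; last exact: Pdet.
rewrite /disc.
apply: (@Pres T F P Pext Pc PD PM m.+1 m (fun x => char_poly (M x))
   (fun x => (char_poly (M x))^`())).
- by move=> x; rewrite size_char_poly.
- by move=> x; rewrite size_deriv_char.
- exact: (PPchar Pext Pc PD PM HM).
- exact: (PPderiv Pext Pc PM (PPchar Pext Pc PD PM HM)).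
Qed.

End DiscClosure.

Lemma avoid (F : numFieldType) (q : {poly F}) (d : F) : q != 0 -> 0 < d ->
  exists u, 0 < u /\ u < d /\ q.[u] != 0.
Proof.
move=> q0 d0.
pose rs := [seq d / (j.+2)%:R | j <- iota 0 (size q)].
have urs : uniq rs.
  rewrite map_inj_uniq ?iota_uniq //.
  move=> a b /= E; have E2 : (a.+2)%:R^-1 = (b.+2)%:R^-1 :> F.
    exact: (mulfI (lt0r_neq0 d0)).
  by move/invr_inj/eqP: E2; rewrite eqr_nat !eqSS => /eqP.
have : ~~ all (root q) rs.
  apply/negP => ar; have := max_poly_roots q0 ar urs.
  by rewrite size_map size_iota ltnn.
case/allPn => x /mapP[j _ ->] nr; exists (d / (j.+2)%:R); split.
  by rewrite divr_gt0 // ltr0n.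
split; last by [].
by rewrite ltr_pdivrMr ?ltr0n // ltr_pMr // ltr1n.
Qed.

Definition path_mx (F : numFieldType) m (M0 : 'M[F]_m) (u : F) : 'M[F]_m :=
  (1 - u) *: M0 + u *: Kmx F m.

Lemma dens (F : numFieldType) m (M0 : 'M[F]_m.+1) (d : F) : 0 < d ->
  exists u, 0 < u /\ u < d /\ disc (path_mx M0 u) * \det (path_mx M0 u) != 0.
Proof.
move=> d0.
pose P := fun phi : F -> F => exists q : {poly F}, forall u, phi u = q.[u].
have : P (fun u => disc (path_mx M0 u) * \det (path_mx M0 u)).
  apply: PG.
  - by move=> f g E [q Hq]; exists q => u; rewrite -E.
  - by move=> c; exists c%:P => u; rewrite hornerC.
  - by move=> f g [p Hp] [q Hq]; exists (p + q) => u; rewrite hornerD Hp Hq.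
  - by move=> f g [p Hp] [q Hq]; exists (p * q) => u; rewrite hornerM Hp Hq.
  move=> i j; exists ((1 - 'X) * (M0 i j)%:P + 'X * (Kmx F m.+1 i j)%:P) => u.
  by rewrite !mxE !(hornerD, hornerM, hornerC, hornerX, hornerN, hornerE).
case=> q Hq.
have q1 : q.[1] != 0.
  rewrite -Hq /path_mx subrr scale0r add0r scale1r; exact: K_disc.
have q0 : q != 0 by apply: contraNneq q1 => ->; rewrite horner0.
have [u [u0 [ud qu]]] := avoid q0 d0.
by exists u; rewrite Hq.
Qed.


Lemma cont_G (F : numFieldType) m (A : 'M[F]_m.+1) :
  disc A * \det A != 0 -> exists2 d : F, 0 < d & forall B,
   (forall i j, `|(B : 'M[F]_m.+1) i j - A i j| < d) -> disc B * \det B != 0.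
Proof.
move=> GA.
have hc : continuous (fun B : 'M[F]_m.+1 => disc B * \det B).
  have c1 : forall c : F, continuous (fun _ : 'M[F]_m.+1 => c).
    by move=> c; apply: cst_continuous.
  have c2 : forall f g : 'M[F]_m.+1 -> F, continuous f -> continuous g ->
     continuous (fun x => f x + g x).
    by move=> f g cf cg x; apply: continuousD; [apply: cf|apply: cg].
  have c3 : forall f g : 'M[F]_m.+1 -> F, continuous f -> continuous g ->
     continuous (fun x => f x * g x).
    by move=> f g cf cg x; apply: continuousM; [apply: cf|apply: cg].
  have c0 : forall f g : 'M[F]_m.+1 -> F, (forall x, f x = g x) -> continuous f ->
     continuous g.
    by move=> f g E cf; have -> : g = f by apply/funext => x; rewrite E.
  have c4 : forall i j, continuous (fun B : 'M[F]_m.+1 => B i j).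
    by move=> i j; apply: coord_continuous.
  exact: (PG c0 c1 c2 c3 c4).
have := hc A; move/cvgrPdist_lt => /(_ `|disc A * \det A|).
rewrite normr_gt0 GA => /(_ isT) /nbhs_ballP [e e0 He].
exists e => // B hB.
have hb : ball A e B by split => // i j; rewrite /ball /= distrC; exact: hB.
have := He B hb; move=> /= h; apply/eqP => GB0; move: h.
by rewrite GB0 subr0 ltxx.
Qed.


Section Main.
Variables (R : realType) (F : numFieldType) (iota : {rmorphism F -> R[i]}).
Variables (m : nat) (N : 'M[F]_m.+1 -> F).
Hypothesis HN : is_mxnorm N.
Variables (c : F) (c0 : 0 < c).
Hypothesis Hc : forall (X : 'M[F]_m.+1) i j, `|X i j| <= c * N X.

Let G (X : 'M[F]_m.+1) := disc X * \det X.

Lemma G_good X : G X != 0 -> X \in unitmx /\ simple_spectrum iota X.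
Proof.
rewrite /G mulf_eq0 negb_or => /andP[d1 d2]; split.
  by rewrite unitmxE unitfE.
by apply/simpleE; rewrite sepE.
Qed.

Lemma N_ge0 X : 0 <= N X. Proof. by case: HN. Qed.
Lemma N_tri X Y : N (X + Y) <= N X + N Y. Proof. by case: HN. Qed.
Lemma N_scale (a : F) X : N (a *: X) = `|a| * N X. Proof. by case: HN. Qed.

Lemma N_sym X Y : N (X - Y) = N (Y - X).
Proof.
have -> : Y - X = (-1) *: (X - Y) by rewrite scaleN1r opprB.
by rewrite N_scale normrN1 mul1r.
Qed.

Lemma approx M (d : F) : 0 < d -> exists X, G X != 0 /\ N (X - M) < d.
Proof.
move=> d0.
set W := N (Kmx F m.+1 - M).
have W1 : 0 < W + 1 by rewrite ltr_wpDl ?N_ge0.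
have [u [u0 [ud Gu]]] := dens M (divr_gt0 d0 W1).
exists (path_mx M u); split => //.
have -> : path_mx M u - M = u *: (Kmx F m.+1 - M).
  by rewrite /path_mx scalerBl scale1r scalerBr addrAC (addrC M) addrK addrC.
rewrite (N_scale u) ger0_norm ?ltW //.
apply: (le_lt_trans (y := u * (W + 1))).
  by rewrite ler_wpM2l ?ltW // /W ?ltrDl ?lerDl ?ltr01 ?ler01.
by rewrite -ltr_pdivlMr.
Qed.

Lemma openG X : G X != 0 -> exists2 r : F, 0 < r & forall Y, N (Y - X) < r -> G Y != 0.
Proof.
move=> GX; have [d d0 Hd] := cont_G GX.
exists (d / c); first by rewrite divr_gt0.
move=> Y hY; apply: Hd => i j.
have -> : Y i j - X i j = (Y - X) i j by rewrite !mxE.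
apply: (le_lt_trans (Hc (Y - X) i j)).
by rewrite mulrC -ltr_pdivlMr.
Qed.

Lemma core (h : 'M[F]_m.+1 -> 'M[F]_m.+1)
  (hU : forall X, X \in unitmx -> h X \in unitmx) (Hh : open_GL_map N h)
  (A0 : 'M[F]_m.+1) (eps : F) (eps0 : 0 < eps) (C : 'M[F]_m.+1)
  (CU : C \in unitmx) (side : bool) :
  exists X, [/\ X \in unitmx, simple_spectrum iota X, N (A0 - X) < eps &
    simple_spectrum iota (if side then h X *m C else C *m h X)].
Proof.
have [X0 [GX0 NX0]] := approx A0 eps0.
pose U := fun X => [/\ X \in unitmx, N (A0 - X) < eps & G X != 0].
have oU : open_in_GL N U.
  split; first by move=> X [].
  move=> X [XU NX GX]; have [r r0 Hr] := openG GX.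
  set s := eps - N (A0 - X).
  have s0 : 0 < s by rewrite subr_gt0.
  have rs0 : 0 < r + s by rewrite addr_gt0.
  exists (r * s / (r + s)); first by rewrite divr_gt0 // mulr_gt0.
  move=> B BU NB.
  have NBr : N (B - X) < r.
    apply: (lt_trans NB); rewrite ltr_pdivrMr // ltr_pM2l //.
    by rewrite ltrDr.
  have NBs : N (B - X) < s.
    apply: (lt_trans NB); rewrite ltr_pdivrMr // mulrC ltr_pM2l //.
    by rewrite ltrDl.
  split => //; last exact: Hr.
  have -> : A0 - B = (A0 - X) + (X - B) by rewrite addrA subrK.
  apply: (le_lt_trans (N_tri _ _)).
  by rewrite -ltrBrDl N_sym.
have UX0 : U X0.
  have [XU _] := G_good GX0.
  by split => //; rewrite N_sym.
have [_ oI] := Hh U oU.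
have [d d0 Hd] := oI (h X0) (ex_intro2 _ _ X0 UX0 erefl).
pose Y0 := h X0.
pose W := if side then Kmx F m.+1 *m invmx C - Y0 else invmx C *m Kmx F m.+1 - Y0.
pose M := if side then Y0 *m C else C *m Y0.
have W1 : 0 < N W + 1 by rewrite ltr_wpDl ?N_ge0.
have [u [u0 [ud Gu]]] := dens M (divr_gt0 d0 W1).
pose Y := if side then path_mx M u *m invmx C else invmx C *m path_mx M u.
have YY0 : Y - Y0 = u *: W.
  rewrite /Y /W /M /path_mx; case: (side).
    rewrite mulmxDl -!scalemxAl mulmxK //.
    by rewrite scalerBl scale1r scalerBr addrAC (addrC Y0) addrK addrC.
  rewrite mulmxDr -!scalemxAr mulKmx //.
  by rewrite scalerBl scale1r scalerBr addrAC (addrC Y0) addrK addrC.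
have YU : Y \in unitmx.
  have [PU _] := G_good Gu.
  by rewrite /Y; case: (side); rewrite unitmx_mul ?unitmx_inv ?PU ?CU.
have NY : N (Y - Y0) < d.
  rewrite YY0 (N_scale u) ger0_norm ?ltW //.
  apply: (le_lt_trans (y := u * (N W + 1))).
    by rewrite ler_wpM2l ?ltW // ltrDl ltr01.
  by rewrite -ltr_pdivlMr.
have [X [XU NX GX] EX] := Hd Y YU NY.
exists X; split => //; first by have [] := G_good GX.
rewrite -EX.
have -> : (if side then Y *m C else C *m Y) = path_mx M u.
  by rewrite /Y; case: (side); rewrite ?mulmxKV ?mulKVmx.
by have [] := G_good Gu.
Qed.

End Main.

Lemma main_gen (R : realType) (F : numFieldType) (iota : {rmorphism F -> R[i]}) :
  (forall m (N : 'M[F]_m.+1 -> F), is_mxnorm N ->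
     exists2 c : F, 0 < c & forall (X : 'M[F]_m.+1) i j, `|X i j| <= c * N X) ->
  prop1_for iota.
Proof.
move=> Hnb [//|m] _ N HN f g fU gU Hopen A B eps eps0.
have [c c0 Hc] := Hnb m N HN.
case: Hopen => [Hf|Hg].
  have [B0 [GB NB]] := approx HN B eps0.
  have [B0U B0s] := G_good iota GB.
  have [X [XU Xs NX Xp]] := core iota HN c0 Hc fU Hf A eps0 (gU _ B0U) true.
  by exists X, B0; split => //; split => //; rewrite N_sym.
have [A0 [GA NA]] := approx HN A eps0.
have [A0U A0s] := G_good iota GA.
have [X [XU Xs NX Xp]] := core iota HN c0 Hc gU Hg B eps0 (fU _ A0U) false.
by exists A0, X; split => //; split => //; rewrite N_sym.
Qed.


Section NuLower.
Variables (R : realType) (k : nat) (nu : 'rV[R]_k -> R).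
Hypotheses (nu0 : forall v, 0 <= nu v) (nudef : forall v, nu v = 0 -> v = 0)
  (nuD : forall v w, nu (v + w) <= nu v + nu w)
  (nuZ : forall (a : R) v, nu (a *: v) = `|a| * nu v).

Lemma nu_zero : nu 0 = 0.
Proof. by rewrite -(scale0r 0) nuZ normr0 mul0r. Qed.

Lemma nu_sum (I : Type) (r : seq I) (f : I -> 'rV[R]_k) :
  nu (\sum_(i <- r) f i) <= \sum_(i <- r) nu (f i).
Proof.
elim: r => [|a r IH]; first by rewrite !big_nil nu_zero.
rewrite !big_cons; apply: (le_trans (nuD _ _)); exact: lerD.
Qed.

Let L := \sum_(j < k) nu 'e_j.

Lemma nu_lip v : nu v <= \sum_(j < k) `|v 0 j| * nu 'e_j.
Proof.
rewrite {1}(row_sum_delta v); apply: (le_trans (nu_sum _ _)).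
by apply: ler_sum => j _; rewrite nuZ.
Qed.

Lemma nu_diff v w : `|nu v - nu w| <= nu (v - w).
Proof.
have nuN : forall x, nu (- x) = nu x.
  by move=> x; rewrite -scaleN1r nuZ normrN1 mul1r.
have h1 := nuD (w - v) v; rewrite subrK -opprB nuN in h1.
have h2 := nuD (v - w) w; rewrite subrK in h2.
rewrite ler_norml; apply/andP; split; lra.
Qed.

Lemma nu_cont : continuous nu.
Proof.
move=> x; apply/(@cvgrPdist_lt _ _ _ (nbhs x)) => e e0.
have L1 : 0 < L + 1 by rewrite ltr_wpDl // sumr_ge0.
apply/nbhs_ballP; exists (e / (L + 1)); first by rewrite /= divr_gt0.
move=> y [_ hy] /=.
apply: (le_lt_trans (nu_diff _ _)); apply: (le_lt_trans (nu_lip _)).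
apply: (le_lt_trans (y := \sum_(j < k) (e / (L + 1)) * nu 'e_j)).
  apply: ler_sum => j _; apply: ler_wpM2r => //.
  by have := hy 0 j; rewrite /ball /= !mxE => /ltW.
rewrite -mulr_sumr -/L mulrAC ltr_pdivrMr // ltr_pM2l //.
by rewrite ltrDl.
Qed.

Local Open Scope classical_set_scope.

Lemma nu_lower : exists2 c : R, 0 < c & forall (v : 'rV[R]_k) j, `|v 0 j| <= c * nu v.
Proof.
case: (pselect (exists j : 'I_k, True)) => [[j0 _]|nj]; last first.
  by exists 1 => // v j; exfalso; apply: nj; exists j.
pose S := [set v : 'rV[R]_k | `|v| = 1].
have e0 : ('e_j0 : 'rV[R]_k) != 0.
  apply/eqP => /matrixP /(_ 0 j0); rewrite !mxE !eqxx /=.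
  by move/eqP; rewrite oner_eq0.
have S0 : S !=set0.
  exists (`|'e_j0 : 'rV[R]_k|^-1 *: 'e_j0); rewrite /S /=.
  by apply: normrZV; rewrite unitfE normr_eq0.
have cS : compact S.
  apply: bounded_closed_compact.
    exists 1; split; first by rewrite num_real.
    by move=> x x1 v Sv; rewrite /= Sv ltW.
  have -> : S = (@Num.Def.normr _ _) @^-1` [set x | x = 1] by [].
  apply: (continuous_closedP _).1; [exact: norm_continuous|exact: closed_eq].
have [c0 Sc0 minc] := EVT_min_rV S0 cS (continuous_subspaceT nu_cont).
move: Sc0; rewrite inE /S /= => c01.
have nc0 : 0 < nu c0.
  rewrite lt0r nu0 andbT; apply/eqP => /nudef c00.
  by move: c01; rewrite c00 normr0 => /eqP; rewrite eq_sym oner_eq0.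
exists (nu c0)^-1; first by rewrite invr_gt0.
move=> v j.
have [->|v0] := eqVneq v 0.
  by rewrite mxE normr0 mulr_ge0 ?nu0 // invr_ge0 ltW.
have nv : 0 < `|v| by rewrite normr_gt0.
set w := `|v|^-1 *: v.
have Sw : `|w| = 1 by apply: normrZV; rewrite unitfE normr_eq0.
have hw : nu c0 <= nu w by apply: minc; rewrite inE.
have vw : nu v = `|v| * nu w.
  by rewrite /w nuZ normrV ?unitfE ?normr_eq0 // normr_id mulrA divff ?mul1r // gt_eqF.
have vj : `|v 0 j| <= `|v|.
  rewrite [leRHS]/Num.Def.normr /= mx_normrE; apply/bigmax_geP; right => /=.
  by exists (0, j).
apply: (le_trans vj); rewrite mulrC ler_pdivlMr // vw.
by rewrite ler_wpM2l // ltW.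
Qed.

End NuLower.


Lemma Hnb_real (R : realType) m (N : 'M[R]_m.+1 -> R) : is_mxnorm N ->
  exists2 c : R, 0 < c & forall (X : 'M[R]_m.+1) i j, `|X i j| <= c * N X.
Proof.
move=> [N0 Ndef ND NZ].
have h1 : forall v : 'rV[R]_(m.+1 * m.+1), 0 <= N (vec_mx v) by move=> v.
have h2 : forall v : 'rV[R]_(m.+1 * m.+1), N (vec_mx v) = 0 -> v = 0.
  by move=> v /Ndef h; rewrite -[v]vec_mxK h linear0.
have h3 : forall v w : 'rV[R]_(m.+1 * m.+1),
  N (vec_mx (v + w)) <= N (vec_mx v) + N (vec_mx w).
  by move=> v w; rewrite linearD /= ND.
have h4 : forall (a : R) (v : 'rV[R]_(m.+1 * m.+1)),
  N (vec_mx (a *: v)) = `|a| * N (vec_mx v).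
  by move=> a v; rewrite linearZ /= NZ.
have [c c0 Hc] := nu_lower h1 h2 h3 h4.
exists c => // X i j.
by have := Hc (mxvec X) (mxvec_index i j); rewrite mxvecE mxvecK.
Qed.


Section Cplx.
Variables (R : realType) (m : nat) (N : 'M[R[i]]_m.+1 -> R[i]).
Hypothesis HN : is_mxnorm N.
Local Notation k := (m.+1 * m.+1)%N.
Local Open Scope complex_scope.

Definition phi (v : 'rV[R]_(k + k)) : 'M[R[i]]_m.+1 :=
  \matrix_(i, j) (((lsubmx v) 0 (mxvec_index i j))%:C
                   + 'i%C * ((rsubmx v) 0 (mxvec_index i j))%:C).

Lemma phiD v w : phi (v + w) = phi v + phi w.
Proof. by apply/matrixP => i j; rewrite !mxE !rmorphD /=; ring. Qed.

Lemma phiZ (a : R) v : phi (a *: v) = a%:C *: phi v.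
Proof. by apply/matrixP => i j; rewrite !mxE !rmorphM /=; ring. Qed.

Lemma Nreal (z : R[i]) : 0 <= z -> z = (complex.Re z)%:C.
Proof.
rewrite lecE => /andP[/eqP h _]; case: z h => a b /= ->.
by [].
Qed.

Lemma ReE (a b : R) : complex.Re (a%:C + 'i%C * b%:C) = a.
Proof. by rewrite /= !(mul0r, mul1r, subr0, addr0, mulr0). Qed.

Lemma ImE (a b : R) : complex.Im (a%:C + 'i%C * b%:C) = b.
Proof. by rewrite /= !(mul0r, mul1r, subr0, addr0, mulr0, add0r). Qed.

Lemma normCR (a : R) : `|a%:C| = (`|a|)%:C.
Proof. by rewrite normc_def /= expr0n /= addr0 sqrtr_sqr. Qed.

Lemma normi : `|'i%C : R[i]| = 1.
Proof. by rewrite normc_def /= expr0n /= add0r expr1n sqrtr1. Qed.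

Lemma ReD (x y : R[i]) : complex.Re (x + y) = complex.Re x + complex.Re y.
Proof. by case: x; case: y. Qed.

Lemma Hnb_cplx : exists2 c : R[i], 0 < c &
  forall (X : 'M[R[i]]_m.+1) i j, `|X i j| <= c * N X.
Proof.
case: HN => N0 Ndef ND NZ.
pose nu v := complex.Re (N (phi v)).
have h1 : forall v, 0 <= nu v.
  by move=> v; have := N0 (phi v); rewrite lecE => /andP[_].
have h2 : forall v, nu v = 0 -> v = 0.
  move=> v nv; have E := Nreal (N0 (phi v)).
  have /Ndef p0 : N (phi v) = 0 by rewrite E /nu in nv *; rewrite nv.
  have Hl : lsubmx v = 0.
    apply/rowP => t; case/mxvec_indexP: t => i j.
    have := congr1 (fun M : 'M[R[i]]_m.+1 => complex.Re (M i j)) p0.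
    by rewrite /= mxE ReE !mxE.
  have Hr : rsubmx v = 0.
    apply/rowP => t; case/mxvec_indexP: t => i j.
    have := congr1 (fun M : 'M[R[i]]_m.+1 => complex.Im (M i j)) p0.
    by rewrite /= mxE ImE !mxE.
  by rewrite -[v]hsubmxK Hl Hr row_mx0.
have h3 : forall v w, nu (v + w) <= nu v + nu w.
  move=> v w; rewrite /nu phiD -ReD.
  by have := ND (phi v) (phi w); rewrite lecE => /andP[_].
have h4 : forall (a : R) v, nu (a *: v) = `|a| * nu v.
  move=> a v; rewrite /nu phiZ NZ normCR.
  by case: (N (phi v)) => x y /=; rewrite mul0r subr0.
have [c c0 Hc] := nu_lower h1 h2 h3 h4.
exists ((2 * c)%:C); first by rewrite ltcR mulr_gt0.
move=> X i j.
pose v := row_mx (mxvec (map_mx (@complex.Re R) X)) (mxvec (map_mx (@complex.Im R) X)).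
have phiv : phi v = X.
  apply/matrixP => a b; rewrite mxE row_mxKl row_mxKr !mxvecE !mxE.
  by rewrite [RHS]complexE.
have ha := Hc v (lshift k (mxvec_index i j)).
have hb := Hc v (rshift k (mxvec_index i j)).
rewrite row_mxEl mxvecE mxE in ha.
rewrite row_mxEr mxvecE mxE in hb.
have EN : N X = (nu v)%:C by rewrite /nu phiv; exact: Nreal.
rewrite EN {1}[X i j]complexE.
apply: (le_trans (ler_normD _ _)); rewrite normrM normi mul1r !normCR.
rewrite -rmorphD -rmorphM lecR; lra.
Qed.

End Cplx.

Theorem proposition1 (R : realType) :
  prop1_for (real_complex R : {rmorphism R -> R[i]}) /\
  prop1_for (@idfun R[i] : {rmorphism R[i] -> R[i]}).
Proof.
split; apply: main_gen.
  by move=> m N HN; exact: Hnb_real.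
by move=> m N HN; exact: Hnb_cplx.
Qed.
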